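(* Let $x$ be a real number with $x \notin \mathbb{Q}$, and let $y_1, \dots, y_k$ be real numbers such that $1, y_1, \dots, y_k$ are linearly independent over $\mathbb{Q}$. Then there exist $k-1$ numbers among $x y_1, \dots, x y_k$ such that $1$, $x$ and these $k-1$ numbers are linearly independent over $\mathbb{Q}$. *)

(* Defs.v *)
From HB Require Import structures.
From mathcomp Require Import all_boot all_order all_algebra.
From mathcomp Require Import reals.
Set Implicit Arguments. Unset Strict Implicit. Unset Printing Implicit Defensive.
Import Order.TTheory GRing.Theory Num.Theory.
Local Open Scope ring_scope.

(* Linear independence over Q of a finite family of reals, given as a
   sequence (multiplicities count): the only rational linear combination
   that vanishes is the trivial one. *)
Definition Qlin_indep (R : realType) (s : seq R) : Prop :=
  forall c : 'I_(size s) -> rat,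
    \sum_(i < size s) ratr (c i) * s`_i = 0 -> forall i, c i = 0.

(* Main.v *)
Require Import Defs.
From HB Require Import structures.
From mathcomp Require Import all_boot all_order all_algebra.
From mathcomp Require Import reals ring.
From Stdlib Require Import Classical.
Import Order.TTheory GRing.Theory Num.Theory.
Local Open Scope ring_scope.

Section H.
Variable R : realType.

Lemma QlinE (s : seq R) : Qlin_indep s <->
  (forall c : nat -> rat, \sum_(i < size s) ratr (c i) * s`_i = 0 ->
     forall i, (i < size s)%N -> c i = 0).
Proof.
split.
  move=> H c Hc i Hi; exact: (H (fun j => c (val j)) Hc (Ordinal Hi)).
move=> H c Hc i.
pose cn n := odflt 0 (omap c (insub n)).
have E : forall j : 'I_(size s), cn j = c j by move=> j; rewrite /cn valK.
rewrite -E; apply: H (ltn_ord i).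
by rewrite -[RHS]Hc; apply: eq_bigr => j _; rewrite E.
Qed.

Lemma sum_cons (c : nat -> rat) (z : R) (t : seq R) :
  \sum_(i < size (z :: t)) ratr (c i) * (z :: t)`_i =
  ratr (c 0%N) * z + \sum_(i < size t) ratr (c i.+1) * t`_i.
Proof. by rewrite big_ord_recl. Qed.

Lemma sum_image (k : nat) (f : 'I_k -> R) (S : {set 'I_k}) (d : nat -> rat) :
  \sum_(i < size [seq f j | j <- enum S]) ratr (d i) * [seq f j | j <- enum S]`_i
  = \sum_(i < #|S|) ratr (d i) * f (enum_val i).
Proof.
rewrite -(big_mkord xpredT (fun i => ratr (d i) * [seq f j | j <- enum S]`_i)).
rewrite size_map -cardE big_mkord; apply: eq_bigr => i _.
by rewrite -(nth_image 0 f).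
Qed.

Lemma hypE (k : nat) (y : 'I_k -> R) :
  Qlin_indep (1 :: [seq y i | i <- enum 'I_k]) ->
  forall (a : rat) (c : 'I_k -> rat),
    ratr a + \sum_j ratr (c j) * y j = 0 -> a = 0 /\ forall j, c j = 0.
Proof.
move/QlinE=> H a c Hc.
pose cn n := match n with 0%N => a | n.+1 => odflt 0 (omap c (insub n)) end.
have E : forall j : 'I_k, cn (val j).+1 = c j by move=> j; rewrite /cn valK.
have Hs : \sum_(i < size (1 :: [seq y i | i <- enum 'I_k])) ratr (cn i) *
   (1 :: [seq y i | i <- enum 'I_k])`_i = 0.
  rewrite sum_cons mulr1 -[RHS]Hc; congr (_ + _).
  rewrite size_map size_enum_ord; apply: eq_bigr => j _.
  rewrite E (nth_map j) ?size_enum_ord // nth_ord_enum //.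
split; first exact: (H _ Hs 0%N).
move=> j; rewrite -E; apply: (H _ Hs); rewrite /= size_map size_enum_ord ltnS //.
Qed.

Lemma goalE (k : nat) (x : R) (f : 'I_k -> R) (S : {set 'I_k}) :
  (forall (a b : rat) (c : 'I_k -> rat), (forall j, j \notin S -> c j = 0) ->
    ratr a + (ratr b * x + \sum_j ratr (c j) * f j) = 0 ->
    [/\ a = 0, b = 0 & forall j, c j = 0]) ->
  Qlin_indep (1 :: x :: [seq f i | i <- enum S]).
Proof.
move=> H; apply/QlinE => c Hc.
pose cA (j : 'I_k) := \sum_(i < #|S| | enum_val i == j) c i.+2.
have HA : forall j, j \notin S -> cA j = 0.
  move=> j jS; apply: big1 => i /eqP ei; exfalso; move: jS; rewrite -ei.
  by rewrite enum_valP.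
have Hsum : \sum_j ratr (cA j) * f j = \sum_(i < #|S|) ratr (c i.+2) * f (enum_val i).
  rewrite /cA.
  under eq_bigr => j _ do rewrite rmorph_sum mulr_suml.
  rewrite (exchange_big_dep predT) //=.
  by apply: eq_bigr => i _; rewrite (big_pred1 (enum_val i)) // => j; rewrite eq_sym.
have := H (c 0%N) (c 1%N) cA HA.
move: Hc; rewrite sum_cons mulr1 (sum_cons (fun i => c i.+1)) (@sum_image _ f S (fun i => c i.+2)) -Hsum.
move=> Hc /(_ Hc) [H0 H1 H2] [|[|i]] // Hi.
have Hi' : (i < #|S|)%N by move: Hi; rewrite /= size_map -cardE.
have := H2 (enum_val (Ordinal Hi')).
rewrite /cA (big_pred1 (Ordinal Hi')) // => j /=.
by rewrite (inj_eq enum_val_inj).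
Qed.

Lemma cardS (k : nat) : exists S : {set 'I_k}, #|S| = k.-1.
Proof.
case: k => [|k]; first by exists set0; rewrite cards0.
by exists [set~ ord0]; rewrite cardsC1 card_ord.
Qed.

Lemma core (k : nat) (x : R) (y : 'I_k -> R) :
  (forall q : rat, x <> ratr q) ->
  (forall (a : rat) (c : 'I_k -> rat),
    ratr a + \sum_j ratr (c j) * y j = 0 -> a = 0 /\ forall j, c j = 0) ->
  exists S : {set 'I_k}, #|S| = k.-1 /\
  forall (a b : rat) (c : 'I_k -> rat), (forall j, j \notin S -> c j = 0) ->
    ratr a + (ratr b * x + \sum_j ratr (c j) * (x * y j)) = 0 ->
    [/\ a = 0, b = 0 & forall j, c j = 0].
Proof.
move=> Hx Hy.
have x0 : x != 0 by apply/eqP => e; apply: (Hx 0); rewrite e rmorph0.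
have L0 : forall b (c : 'I_k -> rat),
    ratr b * x + \sum_j ratr (c j) * (x * y j) = 0 -> b = 0 /\ forall j, c j = 0.
  move=> b c E; apply: Hy.
  have : x * (ratr b + \sum_j ratr (c j) * y j) = 0.
    rewrite mulrDr mulr_sumr -[RHS]E; congr (_ + _); first by rewrite mulrC.
    by apply: eq_bigr => j _; rewrite mulrCA.
  by move/eqP; rewrite mulf_eq0 (negbTE x0) /= => /eqP.
pose rel a b (c : 'I_k -> rat) := ratr a + (ratr b * x + \sum_j ratr (c j) * (x * y j)).
have L1 : forall a b c, rel a b c = 0 -> a = 0 -> b = 0 /\ forall j, c j = 0.
  by move=> a b c E a0; apply: L0; move: E; rewrite /rel a0 rmorph0 add0r.
case: (classic (exists a b c, rel a b c = 0 /\ ~ (a = 0 /\ b = 0 /\ forall j, c j = 0))).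
  case=> a [b [c [E NT]]].
  have a0 : a != 0.
    by apply/eqP => a0; apply: NT; have [? ?] := L1 _ _ _ E a0.
  have [j cj] : exists j, c j != 0.
    case: (classic (exists j, c j != 0)) => // N; exfalso.
    have c0 : forall j, c j = 0.
      by move=> j; apply/eqP; apply: NNPP => cj; apply: N; exists j; apply/negP.
    move: E; rewrite /rel big1 ?addr0; last by move=> j _; rewrite c0 rmorph0 mul0r.
    have [b0|b0] := eqVneq b 0.
      by rewrite b0 rmorph0 mul0r addr0 => /eqP; rewrite fmorph_eq0 (negbTE a0).
    move=> E; apply: (Hx (- a / b)).
    have rb : ratr b != 0 :> R by rewrite fmorph_eq0.
    have E2 : ratr b * x = - ratr a.
      by apply/eqP; rewrite -subr_eq0 opprK addrC E.
    by rewrite fmorph_div rmorphN -E2 mulrC mulKf.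
  exists [set~ j]; split; first by rewrite cardsC1 card_ord.
  move=> a' b' c' Hc' E'.
  have c'j : c' j = 0 by apply: Hc'; rewrite in_setC1 eqxx.
  have E3 : ratr (a' * b - a * b') * x +
      \sum_i ratr (a' * c i - a * c' i) * (x * y i) =
      ratr a' * rel a b c - ratr a * rel a' b' c'.
    rewrite /rel rmorphB !rmorphM.
    have SM : forall d (e : 'I_k -> rat), \sum_i ratr (d * e i) * (x * y i) =
        ratr d * \sum_i ratr (e i) * (x * y i).
      by move=> d e; rewrite mulr_sumr; apply: eq_bigr => i _; rewrite rmorphM mulrA.
    under eq_bigr do rewrite rmorphB mulrBl.
    rewrite sumrB !SM; ring.
  move: E3; rewrite E (_ : rel a' b' c' = 0) // !mulr0 subr0 => /L0 [Hb Hc].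
  have := Hc j; rewrite c'j mulr0 subr0 => /eqP; rewrite mulf_eq0 (negbTE cj) orbF.
  move=> /eqP a'0.
  have [-> Hc2] := L1 _ _ _ E' a'0; split => //.
move=> N; have [S HS] := cardS k; exists S; split => // a b c _ E.
case: (classic (a = 0 /\ b = 0 /\ forall j, c j = 0)) => [[? [? ?]] //|NT].
by exfalso; apply: N; exists a, b, c.
Qed.
End H.

Theorem lemma1 (R : realType) (k : nat) (x : R) (y : 'I_k -> R) :
  (forall q : rat, x <> ratr q) ->
  Qlin_indep (1 :: [seq y i | i <- enum 'I_k]) ->
  exists S : {set 'I_k},
    #|S| = k.-1 /\ Qlin_indep (1 :: x :: [seq x * y i | i <- enum S]).
Proof.
move=> Hx /hypE Hy.
have [S [HS H]] := @core R k x y Hx Hy.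
by exists S; split => //; apply: goalE.
Qed.
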